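(* Let $(V,c)$ be a braided vector space (i.e. $c\in GL(V\otimes V)$ satisfies $(c\otimes \mathrm{Id})(\mathrm{Id}\otimes c)(c\otimes \mathrm{Id})=(\mathrm{Id}\otimes c)(c\otimes \mathrm{Id})(\mathrm{Id}\otimes c)$) which is of left group-type (resp. right group-type) with respect to an ordered basis $[x_1,\ldots,x_m]$ of $V$, and define $S\in GL(V\otimes V)$ by $S(x_i\otimes x_j)=x_j\otimes x_i$. Then for every $n\ge 2$ the assignment $\sigma_i\mapsto \mathrm{Id}_V^{\otimes i-1}\otimes c\otimes \mathrm{Id}_V^{\otimes n-i-1}$, $s_i\mapsto \mathrm{Id}_V^{\otimes i-1}\otimes S\otimes \mathrm{Id}_V^{\otimes n-i-1}$ ($1\le i\le n-1$) defines a representation of $OLB_n$ (resp. of $LB_n$) on $V^{\otimes n}$; that is, $(V,c,S)$ is a loop braided vector space.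
   Context: $(V,c)$ is of left group-type w.r.t. $[x_1,\ldots,x_m]$ if there are $g_i\in GL(V)$ with $c(x_i\otimes z)=g_i(z)\otimes x_i$ for all $i$, $z\in V$; of right group-type if there are $g_j\in GL(V)$ with $c(z\otimes x_j)=x_j\otimes g_j(z)$ for all $j$, $z\in V$. The loop braid group $LB_n$ is the group generated by $\sigma_i,s_i$ ($1\le i\le n-1$) subject to: $\sigma_i\sigma_{i+1}\sigma_i=\sigma_{i+1}\sigma_i\sigma_{i+1}$; $\sigma_i\sigma_j=\sigma_j\sigma_i$ for $|i-j|>1$; $s_is_{i+1}s_i=s_{i+1}s_is_{i+1}$; $s_is_j=s_js_i$ for $|i-j|>1$; $s_i^2=1$; $\sigma_is_j=s_j\sigma_i$ for $|i-j|>1$; (L1) $s_is_{i+1}\sigma_i=\sigma_{i+1}s_is_{i+1}$; (L2) $\sigma_i\sigma_{i+1}s_i=s_{i+1}\sigma_i\sigma_{i+1}$. The group $OLB_n$ has the same generators and relations except that (L2) is replaced by (L3) $s_i\sigma_{i+1}\sigma_i=\sigma_{i+1}\sigma_is_{i+1}$. A triple $(V,c,S)$ with $S\in GL(V\otimes V)$ is called a loop braided vector space if the local assignment in the claim defines a representation of $LB_n$ or $OLB_n$. *)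

(* Defs.v *)
(* V = K^m with its standard ordered basis x_1..x_m (indices 'I_m).
   V^{(x)n} has basis the words {ffun 'I_n -> 'I_m}; linear operators are square
   matrices indexed (via enum_rank/enum_val) by the basis of the tensor power,
   acting on column vectors: entry (w', w) = coefficient of basis word w' in the
   image of basis word w. *)
From HB Require Import structures.
From mathcomp Require Import all_boot all_order all_algebra.
Set Implicit Arguments. Unset Strict Implicit. Unset Printing Implicit Defensive.
Import GRing.Theory.
Local Open Scope ring_scope.

Section LoopBraided.
Variables (K : fieldType) (m : nat).

(* basis of V (x) V : pairs (i,j) standing for x_i (x) x_j *)
Definition Pair := ('I_m * 'I_m)%type.
Definition Word (n : nat) := {ffun 'I_n -> 'I_m}.

Definition mxOf (W : finType) (f : W -> W -> K) : 'M[K]_#|W| :=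
  \matrix_(a, b) f (enum_val a) (enum_val b).
Definition coef (W : finType) (A : 'M[K]_#|W|) (w' w : W) : K :=
  A (enum_rank w') (enum_rank w).

Definition tens2 (u v : 'cV[K]_m) : 'cV[K]_#|{: Pair}| :=
  \col_a (u (enum_val a).1 0 * v (enum_val a).2 0).
Definition bvec (i : 'I_m) : 'cV[K]_m := \col_k (k == i)%:R.

Definition left_group_type (c : 'M[K]_#|{: Pair}|) : Prop :=
  exists g : 'I_m -> 'M[K]_m, forall i, g i \in unitmx /\
    forall z : 'cV[K]_m, c *m tens2 (bvec i) z = tens2 (g i *m z) (bvec i).
Definition right_group_type (c : 'M[K]_#|{: Pair}|) : Prop :=
  exists g : 'I_m -> 'M[K]_m, forall j, g j \in unitmx /\
    forall z : 'cV[K]_m, c *m tens2 z (bvec j) = tens2 (bvec j) (g j *m z).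

Definition flipmx : 'M[K]_#|{: Pair}| :=
  mxOf (fun (b a : Pair) => ((b.1 == a.2) && (b.2 == a.1))%:R).

(* Id^{(x) i} (x) A (x) Id^{(x) n-i-2} on V^{(x) n}, A acting on tensor positions
   i, i+1 (0-indexed; i.e. the paper's position i+1).  Out-of-range i gives 1. *)
Definition locmx (n : nat) (A : 'M[K]_#|{: Pair}|) (i : nat) : 'M[K]_#|{: Word n}| :=
  match (insub i : option 'I_n), (insub i.+1 : option 'I_n) with
  | Some p, Some q =>
      mxOf (fun w' w : Word n =>
        if [forall k : 'I_n, ((k != p) && (k != q)) ==> (w' k == w k)]
        then coef A (w' p, w' q) (w p, w q) else 0)
  | _, _ => 1%:M
  end.

Definition braided (c : 'M[K]_#|{: Pair}|) : Prop :=
  c \in unitmx /\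
  locmx 3 c 0 *m locmx 3 c 1 *m locmx 3 c 0 = locmx 3 c 1 *m locmx 3 c 0 *m locmx 3 c 1.

(* Relations common to LB_n and OLB_n, for images sg i, s i (generators indexed
   0 <= i < n-1, i.e. the paper's sigma_{i+1}, s_{i+1}); plus invertibility. *)
Definition far (i j : nat) := (i.+1 < j)%N || (j.+1 < i)%N.
Definition common_rels (n : nat) (sg s : nat -> 'M[K]_#|{: Word n}|) : Prop :=
  (forall i, (i.+1 < n)%N -> sg i \in unitmx /\ s i \in unitmx) /\
      (forall i, (i.+2 < n)%N -> sg i *m sg i.+1 *m sg i = sg i.+1 *m sg i *m sg i.+1) /\
      (forall i j, (i.+1 < n)%N -> (j.+1 < n)%N -> far i j -> sg i *m sg j = sg j *m sg i) /\
      (forall i, (i.+2 < n)%N -> s i *m s i.+1 *m s i = s i.+1 *m s i *m s i.+1) /\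
      (forall i j, (i.+1 < n)%N -> (j.+1 < n)%N -> far i j -> s i *m s j = s j *m s i) /\
      (forall i, (i.+1 < n)%N -> s i *m s i = 1%:M) /\
      (forall i j, (i.+1 < n)%N -> (j.+1 < n)%N -> far i j -> sg i *m s j = s j *m sg i) /\
      (* (L1) *)
      (forall i, (i.+2 < n)%N -> s i *m s i.+1 *m sg i = sg i.+1 *m s i *m s i.+1).

Definition LB_rep (n : nat) (sg s : nat -> 'M[K]_#|{: Word n}|) : Prop :=
  common_rels sg s /\
  (* (L2) *)
  (forall i, (i.+2 < n)%N -> sg i *m sg i.+1 *m s i = s i.+1 *m sg i *m sg i.+1).

Definition OLB_rep (n : nat) (sg s : nat -> 'M[K]_#|{: Word n}|) : Prop :=
  common_rels sg s /\
  (* (L3) *)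
  (forall i, (i.+2 < n)%N -> s i *m sg i.+1 *m sg i = sg i.+1 *m sg i *m s i.+1).

End LoopBraided.

(* Main.v *)
Require Import Defs.
From HB Require Import structures.
From mathcomp Require Import all_boot all_order all_algebra.
From mathcomp Require Import ring zify.
Set Implicit Arguments. Unset Strict Implicit. Unset Printing Implicit Defensive.
Import GRing.Theory.
Local Open Scope ring_scope.

Section Gen.
Variable K : fieldType.

Definition kcomp (W : finType) (f g : W -> W -> K) (a b : W) : K :=
  \sum_u f a u * g u b.

Lemma sum_enum (W : finType) (F : W -> K) :
  \sum_(j < #|W|) F (enum_val j) = \sum_u F u.
Proof.
rewrite (reindex enum_rank); first by apply: eq_bigr => u _; rewrite enum_rankK.
by exists enum_val => x _; [rewrite enum_rankK|rewrite enum_valK].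
Qed.

Lemma coef_mxOf (W : finType) (f : W -> W -> K) a b : coef (mxOf f) a b = f a b.
Proof. by rewrite /coef /mxOf mxE !enum_rankK. Qed.

Lemma mxOfK (W : finType) (M : 'M[K]_#|W|) : mxOf (coef M) = M.
Proof. by apply/matrixP => i j; rewrite /mxOf /coef mxE !enum_valK. Qed.

Lemma mxOf_mul (W : finType) (f g : W -> W -> K) :
  mxOf f *m mxOf g = mxOf (kcomp f g).
Proof.
apply/matrixP => i j; rewrite !mxE /kcomp -[in RHS]sum_enum.
by apply: eq_bigr => k _; rewrite !mxE.
Qed.

Lemma coefmx_mul (W : finType) (M N : 'M[K]_#|W|) a b :
  coef (M *m N) a b = kcomp (coef M) (coef N) a b.
Proof. by rewrite -{1}(mxOfK M) -{1}(mxOfK N) mxOf_mul coef_mxOf. Qed.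

Lemma coefmx1 (W : finType) (a b : W) : coef (1%:M : 'M[K]_#|W|) a b = (a == b)%:R.
Proof. by rewrite /coef mxE (inj_eq enum_rank_inj). Qed.

Lemma mxOf_ext (W : finType) (f g : W -> W -> K) :
  (forall a b, f a b = g a b) -> mxOf f = mxOf g.
Proof. by move=> h; apply/matrixP => i j; rewrite !mxE h. Qed.

Lemma mxOf1 (W : finType) : mxOf (fun a b : W => (a == b)%:R) = 1%:M :> 'M[K]_#|W|.
Proof. by rewrite -(mxOfK 1%:M); apply: mxOf_ext => a b; rewrite coefmx1. Qed.

Lemma sum_unique (W : finType) (F : W -> K) u0 :
  (forall u, u != u0 -> F u = 0) -> \sum_u F u = F u0.
Proof. by move=> h; rewrite (bigD1 u0) //= big1 ?addr0. Qed.

End Gen.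

Section Window.
Variables (K : fieldType) (m n k i : nat).
Hypothesis hik : (i + k <= n)%N.
Local Notation W := (Word m n.+1).
Local Notation V := (Word m k.+1).

Definition inW (x : 'I_n.+1) := (i <= x <= i + k)%N.
Definition rr (w : W) : V := [ffun t : 'I_k.+1 => w (inord (i + t))].
Definition splice (w : W) (t : V) : W :=
  [ffun x => if inW x then t (inord (x - i)) else w x].
Definition agree (w' w : W) := [forall x, ~~ inW x ==> (w' x == w x)].
Definition Lift (F : V -> V -> K) (w' w : W) : K :=
  if agree w' w then F (rr w') (rr w) else 0.
Definition Phi (M : 'M[K]_#|{: V}|) : 'M[K]_#|{: W}| := mxOf (Lift (coef M)).

Lemma posK (t : 'I_k.+1) : nat_of_ord (inord (i + t) : 'I_n.+1) = (i + t)%N.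
Proof. by rewrite inordK //; have := ltn_ord t; lia. Qed.

Lemma rr_splice w t : rr (splice w t) = t.
Proof.
apply/ffunP => y; rewrite !ffunE /inW posK.
have := ltn_ord y; case: ifP => [_ _|]; last lia.
by rewrite addKn inord_val.
Qed.

Lemma agree_splice w t : agree (splice w t) w.
Proof. by apply/forallP => x; apply/implyP => h; rewrite ffunE (negbTE h). Qed.

Lemma agree_refl w : agree w w.
Proof. by apply/forallP => x; apply/implyP. Qed.

Lemma agree_sym w1 w2 : agree w1 w2 -> agree w2 w1.
Proof. by move/forallP => h; apply/forallP => x; rewrite eq_sym; exact: h. Qed.

Lemma agree_trans w1 w2 w3 : agree w1 w2 -> agree w2 w3 -> agree w1 w3.
Proof.
move/forallP => h1 /forallP h2; apply/forallP => x; apply/implyP => hx.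
by rewrite (eqP (implyP (h1 x) hx)) (implyP (h2 x) hx).
Qed.

Lemma splice_rr u w : agree u w -> splice w (rr u) = u.
Proof.
move/forallP => h; apply/ffunP => x; rewrite !ffunE.
case: ifP => hx.
  have -> : (inord (i + (inord (x - i) : 'I_k.+1)) : 'I_n.+1) = x => //.
  apply: val_inj; move: hx; rewrite /inW /= => hx; rewrite inordK; rewrite inordK; lia.

by rewrite (eqP (implyP (h x) (negbT hx))).
Qed.

Lemma Lift_comp (F G : V -> V -> K) w' w :
  kcomp (Lift F) (Lift G) w' w = Lift (kcomp F G) w' w.
Proof.
rewrite /kcomp /Lift; case: (boolP (agree w' w)) => hw; last first.
  apply: big1 => u _; case: ifP => h1; case: ifP => h2; rewrite ?mul0r ?mulr0 //.
  by rewrite (agree_trans h1 h2) in hw.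
rewrite (bigID (fun u => agree u w)) /= [X in _ + X]big1 ?addr0; last first.
  by move=> u /negbTE hu; rewrite hu mulr0.
rewrite (reindex_onto (splice w) rr); last by move=> u; exact: splice_rr.
apply: eq_big => t; first by rewrite agree_splice rr_splice eqxx.
move=> _; rewrite agree_splice rr_splice.
by rewrite (agree_trans hw (agree_sym (agree_splice w t))).
Qed.

Lemma Lift_delta w' w : Lift (fun a b => (a == b)%:R) w' w = (w' == w)%:R.
Proof.
rewrite /Lift; case: ifP => h; last first.
  by case: eqP => // e; rewrite e agree_refl in h.
have -> // : (rr w' == rr w) = (w' == w).
apply/idP/idP => [/eqP e|/eqP -> //]; apply/eqP.
by rewrite -(splice_rr h) e splice_rr // agree_refl.
Qed.

Lemma Phi_mul M N : Phi (M *m N) = Phi M *m Phi N.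
Proof.
rewrite /Phi mxOf_mul; apply: mxOf_ext => a b.
rewrite Lift_comp /Lift; case: ifP => // _; exact: coefmx_mul.
Qed.

Lemma Phi1 : Phi 1%:M = 1%:M.
Proof.
rewrite /Phi -(mxOf1 K (Word m n.+1)); apply: mxOf_ext => a b.
by rewrite -Lift_delta /Lift; case: ifP => //; rewrite coefmx1.
Qed.

End Window.

Section Loc.
Variables (K : fieldType) (m : nat).

Definition LocK (A : 'M[K]_#|{: Pair m}|) (N : nat) (p q : 'I_N) (w' w : Word m N) : K :=
  if [forall x, ((x != p) && (x != q)) ==> (w' x == w x)]
  then coef A (w' p, w' q) (w p, w q) else 0.

Lemma eq_inord N (x : 'I_N.+1) j : (j < N.+1)%N -> (x == inord j) = (nat_of_ord x == j).
Proof. by move=> h; rewrite -val_eqE /= inordK. Qed.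

Lemma insub_inord N j : (j < N.+1)%N -> (insub j : option 'I_N.+1) = Some (inord j).
Proof.
move=> h; case: insubP => [u _ eu|]; last by rewrite h.
by congr Some; apply: val_inj; rewrite /= inordK // -eu.
Qed.

Lemma locmxE n (A : 'M[K]_#|{: Pair m}|) i : (i.+1 < n.+1)%N ->
  locmx n.+1 A i = mxOf (LocK A (inord i) (inord i.+1)).
Proof.
move=> h; rewrite /locmx insub_inord ?insub_inord //; lia.
Qed.

Lemma Phi_loc n k i (hik : (i + k <= n)%N) (A : 'M[K]_#|{: Pair m}|) t :
  (t.+1 <= k)%N -> Phi n i (locmx k.+1 A t) = locmx n.+1 A (i + t).
Proof.
move=> ht; rewrite locmxE; last lia.
rewrite locmxE; last lia.
rewrite /Phi; apply: mxOf_ext => w' w; rewrite /Lift coef_mxOf /LocK.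
have e1 : rr k i w' (inord t) = w' (inord (i + t)).
  by rewrite ffunE inordK //; lia.
have e2 : rr k i w' (inord t.+1) = w' (inord (i + t).+1).
  by rewrite ffunE inordK ?addnS //; lia.
have e3 : rr k i w (inord t) = w (inord (i + t)).
  by rewrite ffunE inordK //; lia.
have e4 : rr k i w (inord t.+1) = w (inord (i + t).+1).
  by rewrite ffunE inordK ?addnS //; lia.
rewrite e1 e2 e3 e4.
set F1 := [forall x, _]; set F2 := [forall x, _].
suff <- : agree k i w' w && F1 = F2 by case: (agree _ _ _ _); case: F1.
apply/idP/idP.
- case/andP => /forallP ha /forallP hf; apply/forallP => x; apply/implyP.
  rewrite !eq_inord; try lia.
  move=> hx; case: (boolP (inW k i x)) => hw; last exact: (implyP (ha x) hw).
  have := implyP (hf (inord (x - i))); rewrite !eq_inord; try lia.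
  rewrite !ffunE.
  have -> : (inord (i + (inord (x - i) : 'I_k.+1)) : 'I_n.+1) = x.
    apply: val_inj; move: hw; rewrite /inW /= => hw; rewrite inordK; rewrite inordK; lia.
  move: hw; rewrite /inW => hw; rewrite /= inordK; last lia.
  by apply; move: hx hw => /= hx hw; lia.
- move/forallP => h; apply/andP; split; apply/forallP.
  + move=> x; apply/implyP => hx; apply: (implyP (h x)).
    by move: hx; rewrite /inW !eq_inord; lia.
  + move=> y; apply/implyP; rewrite !eq_inord; try lia.
    move=> hy; rewrite !ffunE; apply: (implyP (h _)).
    rewrite !eq_inord; try lia.
    by rewrite inordK; have := ltn_ord y; lia.
Qed.

End Loc.

Section Far.
Variables (K : fieldType) (m : nat).

Lemma far_kcomp N (A B : 'M[K]_#|{: Pair m}|) (p q p' q' : 'I_N) :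
  p != p' -> p != q' -> q != p' -> q != q' -> forall w' w,
  kcomp (LocK A p q) (LocK B p' q') w' w =
  if [forall x, [&& x != p, x != q, x != p' & x != q'] ==> (w' x == w x)]
  then coef A (w' p, w' q) (w p, w q) * coef B (w' p', w' q') (w p', w q') else 0.
Proof.
move=> h1 h2 h3 h4 w' w.
pose u0 : Word m N := [ffun x => if (x == p) || (x == q) then w x else w' x].
rewrite /kcomp (sum_unique (u0 := u0)); last first.
  move=> u /negP nu; rewrite /LocK.
  case: ifP => /forallP e1; last by rewrite mul0r.
  case: ifP => /forallP e2; last by rewrite mulr0.
  exfalso; apply: nu; apply/eqP/ffunP => x; rewrite ffunE.
  case: (boolP ((x == p) || (x == q))) => hx.
    apply/eqP; apply: (implyP (e2 x)).
    by case/orP: hx => /eqP ->; apply/andP; split; rewrite // eq_sym.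
  by rewrite negb_or in hx; rewrite (eqP (implyP (e1 x) hx)).
have up : u0 p = w p by rewrite ffunE eqxx.
have uq : u0 q = w q by rewrite ffunE eqxx orbT.
have up' : u0 p' = w' p' by rewrite ffunE eq_sym (negbTE h1) eq_sym (negbTE h3).
have uq' : u0 q' = w' q' by rewrite ffunE eq_sym (negbTE h2) eq_sym (negbTE h4).
rewrite /LocK up uq up' uq'.
have -> : [forall x, (x != p) && (x != q) ==> (w' x == u0 x)].
  by apply/forallP => x; apply/implyP => hx; rewrite ffunE; case/andP: hx => /negbTE -> /negbTE ->.
set C1 := [forall x, _ ==> (u0 x == w x)]; set C2 := [forall x, _].
suff -> : C1 = C2 by case: C2; rewrite ?mulr0.
apply: eq_forallb => x; rewrite ffunE.
case: (boolP ((x == p) || (x == q))) => hx /=.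
  rewrite eqxx implybT.
  by case/orP: hx => /eqP ->; rewrite eqxx ?andbF.
by rewrite negb_or in hx; case/andP: hx => -> ->.
Qed.

Lemma far_comm N (A B : 'M[K]_#|{: Pair m}|) (p q p' q' : 'I_N) :
  p != p' -> p != q' -> q != p' -> q != q' ->
  mxOf (LocK A p q) *m mxOf (LocK B p' q') = mxOf (LocK B p' q') *m mxOf (LocK A p q).
Proof.
move=> h1 h2 h3 h4; rewrite !mxOf_mul; apply: mxOf_ext => w' w.
rewrite !far_kcomp // 1?eq_sym //; try by rewrite eq_sym.
set C1 := [forall x, _]; set C2 := [forall x, _].
suff -> : C1 = C2 by case: C2; rewrite // mulrC.
apply: eq_forallb => x.
by case: (x != p); case: (x != q); case: (x != p'); case: (x != q').
Qed.

Lemma locmx_far n (A B : 'M[K]_#|{: Pair m}|) i j :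
  (i.+1 < n.+1)%N -> (j.+1 < n.+1)%N -> far i j ->
  locmx n.+1 A i *m locmx n.+1 B j = locmx n.+1 B j *m locmx n.+1 A i.
Proof.
move=> hi hj hf; rewrite !locmxE //; apply: far_comm;
  rewrite eq_inord ?inordK //; move: hf; rewrite /far; lia.
Qed.

Lemma forall2 (P : 'I_2 -> bool) : [forall x : 'I_2, (x != inord 0) && (x != inord 1) ==> P x].
Proof. by apply/forallP => x; apply/implyP; rewrite !eq_inord //; have := ltn_ord x; lia. Qed.

Definition mk2 (p : Pair m) : Word m 2 := [ffun x => if x == inord 0 then p.1 else p.2].

Lemma mk2K (u : Word m 2) : mk2 (u (inord 0), u (inord 1)) = u.
Proof.
apply/ffunP => x; rewrite ffunE /=; case: ifP => [/eqP -> //|].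
rewrite eq_inord // => h; congr (u _); apply: val_inj; rewrite /= inordK //.
by have := ltn_ord x; move: h; lia.
Qed.

Lemma mk2E (p : Pair m) : (mk2 p (inord 0), mk2 p (inord 1)) = p.
Proof. by rewrite !ffunE eqxx eq_inord // inordK //; case: p. Qed.

Lemma sum_word2 (G : Pair m -> K) :
  \sum_(u : Word m 2) G (u (inord 0), u (inord 1)) = \sum_p G p.
Proof.
rewrite (reindex mk2) /=; first by apply: eq_bigr => p _; rewrite mk2E.
exists (fun u => (u (inord 0), u (inord 1))) => x _; [exact: mk2E| exact: mk2K].
Qed.

Lemma loc2_mul (A B : 'M[K]_#|{: Pair m}|) :
  locmx 2 A 0 *m locmx 2 B 0 = locmx 2 (A *m B) 0.
Proof.
rewrite !locmxE // mxOf_mul; apply: mxOf_ext => a b.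
rewrite /kcomp /LocK !forall2 coefmx_mul /kcomp -sum_word2.
by apply: eq_bigr => u _; rewrite !forall2.
Qed.

Lemma loc2_1 : locmx 2 (1%:M : 'M[K]_#|{: Pair m}|) 0 = 1%:M.
Proof.
rewrite locmxE // -(mxOf1 K (Word m 2)); apply: mxOf_ext => a b.
rewrite /LocK forall2 coefmx1.
have -> // : ((a (inord 0), a (inord 1)) == (b (inord 0), b (inord 1))) = (a == b).
apply/eqP/eqP => [e|-> //]; by rewrite -(mk2K a) -(mk2K b) e.
Qed.

Lemma flip2 : flipmx K m *m flipmx K m = 1%:M.
Proof.
rewrite /flipmx mxOf_mul -(mxOf1 K (Pair m)); apply: mxOf_ext => b a.
rewrite /kcomp (sum_unique (u0 := (b.2, b.1))).
  by rewrite /= !eqxx /=; case: b a => [b1 b2] [a1 a2] /=; rewrite xpair_eqE;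
     case: (b2 == a2); case: (b1 == a1); rewrite ?mulr1 ?mulr0 // andbC.
case=> u1 u2 /=; rewrite xpair_eqE negb_and => h.
case: (boolP ((b.1 == u2) && (b.2 == u1))) => [/andP [/eqP e1 /eqP e2]|]; last by rewrite mul0r.
by rewrite e1 e2 !eqxx in h.
Qed.

End Far.

Section Three.
Variables (K : fieldType) (m : nat).
Local Notation W3 := (Word m 3).

Definition o0 : 'I_3 := @Ordinal 3 0 isT.
Definition o1 : 'I_3 := @Ordinal 3 1 isT.
Definition o2 : 'I_3 := @Ordinal 3 2 isT.

Lemma inord3E : [/\ (inord 0 : 'I_3) = o0, (inord 1 : 'I_3) = o1 & (inord 2 : 'I_3) = o2].
Proof. by split; apply: val_inj; rewrite /= inordK. Qed.

Lemma ord3 (x : 'I_3) : [\/ x = o0, x = o1 | x = o2].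
Proof.
case: x => [[|[|[|k]]] h]; [apply: Or31|apply: Or32|apply: Or33|by []];
  exact: val_inj.
Qed.

Definition mk3 (p q r : 'I_m) : W3 :=
  [ffun x => if x == o0 then p else if x == o1 then q else r].

Lemma mk3E p q r : [/\ mk3 p q r o0 = p, mk3 p q r o1 = q & mk3 p q r o2 = r].
Proof. by rewrite !ffunE. Qed.

Lemma eq_w3 (a b : W3) : (a == b) = [&& a o0 == b o0, a o1 == b o1 & a o2 == b o2].
Proof.
apply/eqP/and3P => [-> //|[/eqP e0 /eqP e1 /eqP e2]].
by apply/ffunP => x; case: (ord3 x) => ->.
Qed.

Lemma forall3_01 (P : 'I_3 -> bool) : [forall x, (x != o0) && (x != o1) ==> P x] = P o2.
Proof.
apply/forallP/idP => [h|h x]; first exact: (implyP (h o2)).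
by apply/implyP; case: (ord3 x) => ->.
Qed.

Lemma forall3_12 (P : 'I_3 -> bool) : [forall x, (x != o1) && (x != o2) ==> P x] = P o0.
Proof.
apply/forallP/idP => [h|h x]; first exact: (implyP (h o0)).
by apply/implyP; case: (ord3 x) => ->.
Qed.

Definition C0 (A : 'M[K]_#|{: Pair m}|) (a b : W3) :=
  (a o2 == b o2)%:R * coef A (a o0, a o1) (b o0, b o1).
Definition C1 (A : 'M[K]_#|{: Pair m}|) (a b : W3) :=
  (a o0 == b o0)%:R * coef A (a o1, a o2) (b o1, b o2).

Lemma loc3_0 A : locmx 3 A 0 = mxOf (C0 A).
Proof.
case: inord3E => e0 e1 e2.
rewrite locmxE // e0 e1; apply: mxOf_ext => a b; rewrite /LocK forall3_01 /C0.
by case: (a o2 == b o2); rewrite ?mul1r ?mul0r.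
Qed.

Lemma loc3_1 A : locmx 3 A 1 = mxOf (C1 A).
Proof.
case: inord3E => e0 e1 e2.
rewrite locmxE // e1 e2; apply: mxOf_ext => a b; rewrite /LocK forall3_12 /C1.
by case: (a o0 == b o0); rewrite ?mul1r ?mul0r.
Qed.

Definition sw0 (a : W3) := mk3 (a o1) (a o0) (a o2).
Definition sw1 (a : W3) := mk3 (a o0) (a o2) (a o1).

Lemma sw0K : involutive sw0.
Proof. by move=> a; apply/eqP; rewrite eq_w3 /sw0 !ffunE !eqxx. Qed.
Lemma sw1K : involutive sw1.
Proof. by move=> a; apply/eqP; rewrite eq_w3 /sw1 !ffunE !eqxx. Qed.

Lemma S3_0 : locmx 3 (flipmx K m) 0 = mxOf (fun a b => (a == sw0 b)%:R).
Proof.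
rewrite loc3_0; apply: mxOf_ext => a b; rewrite /C0 /flipmx coef_mxOf eq_w3 /sw0 !ffunE /=.
by case: (a o2 == b o2); case: (a o0 == b o1); case: (a o1 == b o0);
  rewrite ?mulr1 ?mulr0.
Qed.

Lemma S3_1 : locmx 3 (flipmx K m) 1 = mxOf (fun a b => (a == sw1 b)%:R).
Proof.
rewrite loc3_1; apply: mxOf_ext => a b; rewrite /C1 /flipmx coef_mxOf eq_w3 /sw1 !ffunE /=.
by case: (a o0 == b o0); case: (a o1 == b o2); case: (a o2 == b o1);
  rewrite ?mulr1 ?mulr0.
Qed.

Lemma kcompSL (sw : W3 -> W3) (swK : involutive sw) (X : W3 -> W3 -> K) a b :
  kcomp (fun a b => (a == sw b)%:R) X a b = X (sw a) b.
Proof.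
rewrite /kcomp (sum_unique (u0 := sw a)); first by rewrite swK eqxx mul1r.
move=> u nu; case: eqP => [e|]; last by rewrite mul0r.
by rewrite e swK eqxx in nu.
Qed.

Lemma kcompSR (sw : W3 -> W3) (swK : involutive sw) (X : W3 -> W3 -> K) a b :
  kcomp X (fun a b => (a == sw b)%:R) a b = X a (sw b).
Proof.
rewrite /kcomp (sum_unique (u0 := sw b)); first by rewrite eqxx mulr1.
by move=> u /negbTE ->; rewrite mulr0.
Qed.

Lemma rel_L1 (c : 'M[K]_#|{: Pair m}|) :
  locmx 3 (flipmx K m) 0 *m locmx 3 (flipmx K m) 1 *m locmx 3 c 0 =
  locmx 3 c 1 *m locmx 3 (flipmx K m) 0 *m locmx 3 (flipmx K m) 1.
Proof.
rewrite -[LHS]mulmxA S3_0 S3_1 loc3_0 loc3_1 !mxOf_mul; apply: mxOf_ext => a b.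
rewrite kcompSL; last exact: sw0K.
rewrite kcompSL; last exact: sw1K.
rewrite kcompSR; last exact: sw1K.
rewrite kcompSR; last exact: sw0K.
by rewrite /C0 /C1 /sw0 /sw1 !ffunE /=.
Qed.

Lemma rel_Sbraid :
  locmx 3 (flipmx K m) 0 *m locmx 3 (flipmx K m) 1 *m locmx 3 (flipmx K m) 0 =
  locmx 3 (flipmx K m) 1 *m locmx 3 (flipmx K m) 0 *m locmx 3 (flipmx K m) 1.
Proof.
rewrite -!mulmxA S3_0 S3_1 !mxOf_mul; apply: mxOf_ext => a b.
rewrite kcompSL; last exact: sw0K.
rewrite kcompSL; last exact: sw1K.
rewrite kcompSL; last exact: sw1K.
rewrite kcompSL; last exact: sw0K.
rewrite !eq_w3 /sw0 /sw1 !ffunE /=.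
by case: (a o0 == b o2); case: (a o1 == b o1); case: (a o2 == b o0).
Qed.

End Three.

Section Group.
Variables (K : fieldType) (m : nat).
Local Notation W3 := (Word m 3).

Lemma natb1 : (true%:R : K) = 1.
Proof. by []. Qed.

Lemma natb0 : (false%:R : K) = 0.
Proof. by []. Qed.

Lemma mul_bvec (M : 'M[K]_m) j x : (M *m bvec K j) x 0 = M x j.
Proof.
rewrite mxE (bigD1 j) //= big1 ?addr0; first by rewrite mxE eqxx mulr1.
by move=> k nk; rewrite mxE (negbTE nk) mulr0.
Qed.

Lemma tens2E (u v : 'cV[K]_m) P : tens2 u v (enum_rank P) 0 = u P.1 0 * v P.2 0.
Proof. by rewrite mxE enum_rankK. Qed.

Lemma coef_tens (c : 'M[K]_#|{: Pair m}|) (i j : 'I_m) P :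
  coef c P (i, j) = (c *m tens2 (bvec K i) (bvec K j)) (enum_rank P) 0.
Proof.
rewrite /coef mxE (bigD1 (enum_rank (i, j))) //= big1 ?addr0.
  by rewrite tens2E !mxE /= !eqxx /= ?mulr1n ?mulr1.
move=> k nk; rewrite !mxE.
case: (boolP (((enum_val k).1 == i) && ((enum_val k).2 == j))) => [/andP [/eqP e1 /eqP e2]|].
  by rewrite -(enum_valK k) -e1 -e2 -surjective_pairing eqxx in nk.
by rewrite negb_and => /orP [] /negbTE ->; rewrite ?mul0r ?mulr0.
Qed.

Lemma left_coef (c : 'M[K]_#|{: Pair m}|) (g : 'I_m -> 'M[K]_m) :
  (forall i (z : 'cV[K]_m), c *m tens2 (bvec K i) z = tens2 (g i *m z) (bvec K i)) ->
  forall p1 p2 i j, coef c (p1, p2) (i, j) = g i p1 j * (p2 == i)%:R.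
Proof. by move=> h p1 p2 i j; rewrite coef_tens h tens2E mul_bvec mxE. Qed.

Lemma right_coef (c : 'M[K]_#|{: Pair m}|) (g : 'I_m -> 'M[K]_m) :
  (forall j (z : 'cV[K]_m), c *m tens2 z (bvec K j) = tens2 (bvec K j) (g j *m z)) ->
  forall p1 p2 i j, coef c (p1, p2) (i, j) = (p1 == j)%:R * g j p2 i.
Proof. by move=> h p1 p2 i j; rewrite coef_tens h tens2E mul_bvec mxE. Qed.

Lemma kcomp_left (c : 'M[K]_#|{: Pair m}|) (g : 'I_m -> 'M[K]_m) :
  (forall p1 p2 i j, coef c (p1, p2) (i, j) = g i p1 j * (p2 == i)%:R) ->
  forall x y : W3, kcomp (C1 c) (C0 c) x y =
    (x o2 == y o0)%:R * g (y o0) (x o1) (y o2) * g (y o0) (x o0) (y o1).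
Proof.
move=> h x y; rewrite /kcomp (sum_unique (u0 := mk3 (x o0) (y o0) (y o2))).
  by rewrite /C0 /C1 !h !ffunE /= !eqxx !natb1; ring.
move=> u; rewrite eq_w3 !ffunE /= !negb_and /C0 /C1 !h.
case/orP => [h0|/orP [h1|h2]].
- by rewrite eq_sym (negbTE h0) natb0; ring.
- by rewrite (negbTE h1) natb0; ring.
- by rewrite (negbTE h2) natb0; ring.
Qed.

Lemma kcomp_right (c : 'M[K]_#|{: Pair m}|) (g : 'I_m -> 'M[K]_m) :
  (forall p1 p2 i j, coef c (p1, p2) (i, j) = (p1 == j)%:R * g j p2 i) ->
  forall x y : W3, kcomp (C0 c) (C1 c) x y =
    (x o0 == y o2)%:R * g (x o0) (x o1) (y o0) * g (y o2) (x o2) (y o1).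
Proof.
move=> h x y; rewrite /kcomp (sum_unique (u0 := mk3 (y o0) (x o0) (x o2))).
  by rewrite /C0 /C1 !h !ffunE /= !eqxx !natb1; ring.
move=> u; rewrite eq_w3 !ffunE /= !negb_and /C0 /C1 !h.
case/orP => [h0|/orP [h1|h2]].
- by rewrite (negbTE h0) natb0; ring.
- by rewrite [x o0 == _]eq_sym (negbTE h1) natb0; ring.
- by rewrite [x o2 == _]eq_sym (negbTE h2) natb0; ring.
Qed.

Lemma rel_L3 (c : 'M[K]_#|{: Pair m}|) : left_group_type c ->
  locmx 3 (flipmx K m) 0 *m locmx 3 c 1 *m locmx 3 c 0 =
  locmx 3 c 1 *m locmx 3 c 0 *m locmx 3 (flipmx K m) 1.
Proof.
case=> g hg; have hc := left_coef (fun i => (hg i).2).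
rewrite -[LHS]mulmxA S3_0 S3_1 loc3_0 loc3_1 !mxOf_mul; apply: mxOf_ext => a b.
rewrite kcompSL; last exact: sw0K.
rewrite kcompSR; last exact: sw1K.
rewrite !(kcomp_left hc) /sw0 /sw1 !ffunE /=; ring.
Qed.

Lemma rel_L2 (c : 'M[K]_#|{: Pair m}|) : right_group_type c ->
  locmx 3 c 0 *m locmx 3 c 1 *m locmx 3 (flipmx K m) 0 =
  locmx 3 (flipmx K m) 1 *m locmx 3 c 0 *m locmx 3 c 1.
Proof.
case=> g hg; have hc := right_coef (fun i => (hg i).2).
rewrite -[RHS]mulmxA S3_0 S3_1 loc3_0 loc3_1 !mxOf_mul; apply: mxOf_ext => a b.
rewrite kcompSR; last exact: sw0K.
rewrite kcompSL; last exact: sw1K.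
rewrite !(kcomp_right hc) /sw0 /sw1 !ffunE /=.
case: eqP => [->|]; last by rewrite !mul0r.
ring.
Qed.

End Group.

Section Main.
Variables (K : fieldType) (m : nat).

Lemma loc_w3 n i (h : (i.+2 < n.+1)%N) (A : 'M[K]_#|{: Pair m}|) :
  locmx n.+1 A i = Phi n i (locmx 3 A 0) /\ locmx n.+1 A i.+1 = Phi n i (locmx 3 A 1).
Proof.
have hik : (i + 2 <= n)%N by lia.
by rewrite !(Phi_loc hik) // addn0 addn1.
Qed.

Lemma loc_w2 n i (h : (i.+1 < n.+1)%N) (A : 'M[K]_#|{: Pair m}|) :
  locmx n.+1 A i = Phi n i (locmx 2 A 0).
Proof.
have hik : (i + 1 <= n)%N by lia.
by rewrite (Phi_loc hik) // addn0.
Qed.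

Lemma Phi2_mul n i (h : (i.+1 < n.+1)%N) (A B : 'M[K]_#|{: Pair m}|) :
  Phi n i (locmx 2 A 0) *m Phi n i (locmx 2 B 0) = Phi n i (locmx 2 (A *m B) 0).
Proof.
rewrite -Phi_mul; last lia.
by have -> : locmx 2 A 0 *m locmx 2 B 0 = locmx 2 (A *m B) 0 by exact: loc2_mul.
Qed.

Lemma common n (c : 'M[K]_#|{: Pair m}|) : braided c ->
  common_rels (locmx n.+1 c) (locmx n.+1 (flipmx K m)).
Proof.
case=> cu hbr; split; last split; last split; last split; last split; last split;
  last split.
- move=> i hi; rewrite !(loc_w2 hi); split.
    have := Phi2_mul hi c (invmx c); rewrite mulmxV // loc2_1 Phi1; last lia.
    by case/mulmx1_unit.
  have := Phi2_mul hi (flipmx K m) (flipmx K m); rewrite flip2 loc2_1 Phi1; last lia.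
  by case/mulmx1_unit.
- move=> i hi; have [e0 e1] := loc_w3 hi c.
  by rewrite e0 e1 -!Phi_mul; [congr (Phi _ _ _); exact: hbr|lia..].
- by move=> i j hi hj hf; apply: locmx_far.
- move=> i hi; have [e0 e1] := loc_w3 hi (flipmx K m).
  by rewrite e0 e1 -!Phi_mul; [congr (Phi _ _ _); exact: rel_Sbraid|lia..].
- by move=> i j hi hj hf; apply: locmx_far.
- move=> i hi; rewrite (loc_w2 hi) Phi2_mul // flip2 loc2_1 Phi1 //; lia.
- by move=> i j hi hj hf; apply: locmx_far.
- move=> i hi; have [e0 e1] := loc_w3 hi (flipmx K m); have [f0 f1] := loc_w3 hi c.
  by rewrite e0 e1 f0 f1 -!Phi_mul; [congr (Phi _ _ _); exact: rel_L1|lia..].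
Qed.

End Main.

Theorem proposition3p3 (K : fieldType) (m : nat) (c : 'M[K]_#|{: Pair m}|) :
  braided c ->
  (left_group_type c ->
     forall n : nat, (2 <= n)%N ->
       OLB_rep (locmx n c) (locmx n (flipmx K m))) /\
  (right_group_type c ->
     forall n : nat, (2 <= n)%N ->
       LB_rep (locmx n c) (locmx n (flipmx K m))).
Proof.
move=> hb; split => hg [|n] // hn; (split; first exact: common).
- move=> i hi; have [e0 e1] := loc_w3 hi (flipmx K m); have [f0 f1] := loc_w3 hi c.
  by rewrite e0 e1 f0 f1 -!Phi_mul; [congr (Phi _ _ _); exact: rel_L3|lia..].
- move=> i hi; have [e0 e1] := loc_w3 hi (flipmx K m); have [f0 f1] := loc_w3 hi c.
  by rewrite e0 e1 f0 f1 -!Phi_mul; [congr (Phi _ _ _); exact: rel_L2|lia..].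
Qed.
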